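(* Let $X=\bigcup_{\alpha\in\Lambda}X_\alpha$, where each $X_\alpha$ is a closed locally Menger subspace of $X$ and the family $\{X_\alpha:\alpha\in\Lambda\}$ is locally finite in $X$. Then $X$ is locally Menger.
   Context: A space $X$ is Menger if for each sequence $(\mathcal{U}_n)$ of open covers of $X$ there is a sequence $(\mathcal{V}_n)$ with each $\mathcal{V}_n$ a finite subset of $\mathcal{U}_n$ and $\bigcup_{n}\bigcup\mathcal{V}_n=X$. A space $X$ is locally Menger if for each $x\in X$ there exist an open set $U$ and a Menger subspace $Y$ of $X$ with $x\in U\subseteq Y$. *)

(* Defs.v *)
From HB Require Import structures.
From mathcomp Require Import all_boot all_order all_algebra.
From mathcomp Require Import all_classical all_reals all_analysis.
Set Implicit Arguments. Unset Strict Implicit. Unset Printing Implicit Defensive.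
Local Open Scope classical_set_scope.

Definition open_cover_of {T : topologicalType} (Y : set T) (U : set (set T)) :=
  (forall W, U W -> open W) /\ Y `<=` \bigcup_(W in U) W.

(* Y (as a subspace of X) is Menger.  Open covers of the subspace Y are
   taken as families of open sets of X covering Y (relatively open sets are
   traces of open sets of X). *)
Definition Menger_set {T : topologicalType} (Y : set T) :=
  forall U : nat -> set (set T), (forall n, open_cover_of Y (U n)) ->
  exists V : nat -> set (set T),
    (forall n, V n `<=` U n /\ finite_set (V n)) /\
    Y `<=` \bigcup_n \bigcup_(W in V n) W.

Definition Menger_space (T : topologicalType) := Menger_set [set: T].

Definition locally_Menger_set {T : topologicalType} (Y : set T) :=
  forall x, Y x -> exists (W Z : set T),
    [/\ open W, Z `<=` Y, Menger_set Z, (W `&` Y) x & W `&` Y `<=` Z].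

Definition locally_Menger_space (T : topologicalType) :=
  locally_Menger_set [set: T].

Definition locally_finite_family {T : topologicalType} {I : Type}
  (F : I -> set T) :=
  forall x : T, exists N, nbhs x N /\ finite_set [set i | F i `&` N !=set0].

(* Main.v *)
Require Import Defs.
From HB Require Import structures.
From mathcomp Require Import all_boot all_order all_algebra.
From mathcomp Require Import all_classical all_reals all_analysis.
From mathcomp Require Import finmap.
Local Open Scope classical_set_scope.

Lemma Menger_set0 (T : topologicalType) : Menger_set (@set0 T).
Proof.
move=> U _; exists (fun _ => set0); split => //.
by move=> n; split => //; exact: finite_set0.
Qed.

Lemma Menger_bigcup (T : topologicalType) (I : Type) (F : set I) (Z : I -> set T) :
  finite_set F -> (forall i, Menger_set (Z i)) -> Menger_set (\bigcup_(i in F) Z i).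
Proof.
move=> Ffin HM U HU.
have: forall i, exists V : nat -> set (set T), F i ->
    (forall n, V n `<=` U n /\ finite_set (V n)) /\
    Z i `<=` \bigcup_n \bigcup_(W in V n) W.
  move=> i; have [Fi|nFi] := pselect (F i); last by exists (fun _ => set0).
  have [V HV] : exists V : nat -> set (set T),
    (forall n, V n `<=` U n /\ finite_set (V n)) /\
    Z i `<=` \bigcup_n \bigcup_(W in V n) W.
    apply: HM => n; have [Ho Hc] := HU n; split; first exact: Ho.
    by move=> y Zy; apply: Hc; exists i.
  by exists V.
move=> /choice [V HV].
exists (fun n => \bigcup_(i in F) V i n); split.
  move=> n; split.
    by move=> W [i Fi Wi]; have [/(_ n) [+ _] _] := HV i Fi; apply.
  apply: bigcup_finite => // i Fi.
  by have [/(_ n) [_ +] _] := HV i Fi.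
move=> y [i Fi Zy]; have [_ H] := HV i Fi.
have [n _ [W VW Wy]] := H y Zy.
by exists n => //; exists W => //; exists i.
Qed.

Theorem theorem4p5 (T : topologicalType) (Lambda : Type) (X_ : Lambda -> set T) :
  \bigcup_(a in [set: Lambda]) X_ a = [set: T] ->
  (forall a, closed (X_ a)) ->
  (forall a, locally_Menger_set (X_ a)) ->
  locally_finite_family X_ ->
  locally_Menger_space T.
Proof.
move=> HU Hcl HLM HLF x _.
have [N [Nx Nfin]] := HLF x.
have : forall i, exists p : set T * set T,
    [/\ open p.1, Menger_set p.2, p.1 x & p.1 `&` X_ i `<=` p.2].
  move=> i; have [Xx|nXx] := pselect (X_ i x).
    have [W [Z [Wo ZX ZM [Wx _] WZ]]] := HLM i x Xx.
    by exists (W, Z).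
  exists (~` X_ i, set0); split => //=.
  - exact: closed_openC.
  - exact: Menger_set0.
  - by move=> y [].
move=> /choice [f Hf].
set F := [set i | X_ i `&` N !=set0].
have [D FD] : exists D : {fset (classicType Lambda)}, F = [set` D].
  exact: ((@finite_fsetP (classicType Lambda) F).1 Nfin).
exists (interior (N `&` \bigcap_(i in F) (f i).1)), (\bigcup_(i in F) (f i).2).
split.
- exact: open_interior.
- by [].
- by apply: Menger_bigcup => // i; have [] := Hf i.
- split => //; rewrite /interior /=.
  apply: filterI => //; rewrite FD.
  apply: (@filter_bigI T (classicType Lambda) D (fun i => (f i).1)) => i _.
  have [Wo _ Wx _] := Hf i.
  exact: open_nbhs_nbhs.
- move=> y [/interior_subset [Ny HW] _].
  have : [set: T] y by [].
  rewrite -HU => -[j _ Xj].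
  have Fj : F j by exists y.
  exists j => //.
  have [_ _ _ H] := Hf j.
  by apply: H; split => //; apply: HW.
Qed.
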